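(* Assume Assumption 1 and Assumption 2 (as defined in the context) and the null hypothesis $H_0:\ T_i(1)=T_i(0)$ for all $1\le i\le n$. Then, conditioning on all potential event times $\boldsymbol{T}(1),\boldsymbol{T}(0)$, for every time $t\ge 0$, $$\overline{D}_1(t)\mid \boldsymbol{T}(1),\boldsymbol{T}(0),\overline{N}(t),\overline{D}(t),\overline{N}_1(t)\ \sim\ \mathrm{HGeom}\big(\overline{N}(t),\overline{D}(t),\overline{N}_1(t)\big).$$
   Context: There are $n$ units. Unit $i$ has potential event times $T_i(1),T_i(0)\ge 0$ (under treatment and control), potential censoring times $C_i(1),C_i(0)\in[0,\infty]$, and treatment indicator $Z_i\in\{0,1\}$; bold letters denote the corresponding $n$-vectors. Assumption 1: conditional on $\boldsymbol{T}(1),\boldsymbol{T}(0),\boldsymbol{C}(1),\boldsymbol{C}(0)$, the $Z_i$ are i.i.d. Bernoulli$(p_1)$ with $p_1=1-p_0\in(0,1)$. Assumption 2: $(\boldsymbol{C}(1),\boldsymbol{C}(0))$ is independent of $(\boldsymbol{T}(1),\boldsymbol{T}(0))$, and the pairs $(C_i(1),C_i(0))$, $1\le i\le n$, are i.i.d. (the two components of a pair may be dependent and have different distributions). Realized quantities: $T_i=Z_iT_i(1)+(1-Z_i)T_i(0)$, $C_i=Z_iC_i(1)+(1-Z_i)C_i(0)$, $W_i=\min\{T_i,C_i\}$, $\Delta_i=\mathbb{1}(T_i\le C_i)$. For $t\ge 0$: $\overline{N}_1(t)=\sum_i Z_i\mathbb{1}(W_i\ge t)$, $\overline{N}_0(t)=\sum_i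 (1-Z_i)\mathbb{1}(W_i\ge t)$, $\overline{N}(t)=\overline{N}_1(t)+\overline{N}_0(t)$, $\overline{D}_1(t)=\sum_i Z_i\Delta_i\mathbb{1}(W_i=t)$, $\overline{D}(t)=\sum_i\Delta_i\mathbb{1}(W_i=t)$. $\mathrm{HGeom}(m,k,b)$ denotes the hypergeometric distribution of the number of successes in $b$ draws without replacement from a population of size $m$ containing exactly $k$ successes. *)

(* Defs.v *)
From HB Require Import structures.
From mathcomp Require Import all_boot all_order all_algebra.
From mathcomp Require Import all_classical all_reals all_analysis measurable_realfun.
Set Implicit Arguments. Unset Strict Implicit. Unset Printing Implicit Defensive.
Import Order.TTheory GRing.Theory Num.Theory.
Local Open Scope ring_scope.
Local Open Scope ereal_scope.

Section Survival.
Variables (R : realType) (Omega : Type) (n : nat).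
(* potential event times (fixed: we condition on them) *)
Variables (T1 T0 : 'I_n -> R).
(* treatment indicators Z_i and potential censoring pairs (C_i(1), C_i(0)) *)
Variables (Z : 'I_n -> Omega -> bool) (C : 'I_n -> Omega -> \bar R * \bar R).

Definition Tobs (i : 'I_n) (w : Omega) : R := if Z i w then T1 i else T0 i.
Definition Cobs (i : 'I_n) (w : Omega) : \bar R :=
  if Z i w then (C i w).1 else (C i w).2.
Definition Wobs (i : 'I_n) (w : Omega) : \bar R := mine (Tobs i w)%:E (Cobs i w).
Definition Delta (i : 'I_n) (w : Omega) : bool := (Tobs i w)%:E <= Cobs i w.

Definition Nbar1 (t : R) (w : Omega) : nat :=
  #|[set i : 'I_n | Z i w && (t%:E <= Wobs i w)]|.
Definition Nbar0 (t : R) (w : Omega) : nat :=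
  #|[set i : 'I_n | ~~ Z i w && (t%:E <= Wobs i w)]|.
Definition Nbar (t : R) (w : Omega) : nat := (Nbar1 t w + Nbar0 t w)%N.
Definition Dbar1 (t : R) (w : Omega) : nat :=
  #|[set i : 'I_n | [&& Z i w, Delta i w & Wobs i w == t%:E]]|.
Definition Dbar (t : R) (w : Omega) : nat :=
  #|[set i : 'I_n | Delta i w && (Wobs i w == t%:E)]|.
End Survival.

Definition bern_pmf (R : realType) (p1 : R) (z : bool) : R :=
  if z then p1 else (1 - p1)%R.

(* pmf of HGeom(m, k, b) at d: number of successes in b draws without
   replacement from a population of size m with exactly k successes;
   set to 0 when the parameters are not admissible (k > m or b > m). *)
Definition hgeom_pmf (R : realType) (m k b d : nat) : R :=
  if [&& (k <= m)%N, (b <= m)%N & (d <= b)%N] then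
    (('C(k, d) * 'C(m - k, b - d))%:R / ('C(m, b))%:R)%R
  else 0%R.

(* Main.v *)
Require Import Defs.
From HB Require Import structures.
From mathcomp Require Import all_boot all_order all_algebra.
From mathcomp Require Import all_classical all_reals all_analysis measurable_realfun.
Import Order.TTheory GRing.Theory Num.Theory.
Local Open Scope ring_scope.

Lemma split_sum (R : realType) (I : finType) (S : {set I}) (F G : {set I} -> R) :
  \sum_(U : {set I}) F (U :&: S) * G (U :\: S) =
  (\sum_(A : {set I} | A \subset S) F A) * (\sum_(B : {set I} | B \subset ~: S) G B).
Proof.
rewrite mulr_suml.
under [RHS]eq_bigr do rewrite mulr_sumr.
rewrite pair_big_dep.
rewrite (reindex_onto (fun p : {set I} * {set I} => p.1 :|: p.2)
           (fun U => (U :&: S, U :\: S))) /=; last by move=> U _; rewrite setID.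
apply: eq_big => [[A B]|[A B]] /=.
  apply/idP/idP.
    move/eqP=> [eA eB]; apply/andP; split.
      by rewrite -eA subsetIr.
    by rewrite -eB subsetDr.
  case/andP=> sA sB; apply/eqP; congr pair; apply/setP=> i;
  move: (fintype.subsetP sA i) (fintype.subsetP sB i); rewrite !inE;
  case: (i \in A); case: (i \in B); case: (i \in S) => //= h1 h2;
  first [by have := h1 isT | by have := h2 isT].
by move/eqP=> [-> ->].
Qed.

Lemma split_IE {I : finType} {S E A1 A2 : {set I}} :
  A1 \subset S :&: E -> A2 \subset S :\: E ->
  (A1 :|: A2) :&: E = A1 /\ (A1 :|: A2) :\: E = A2.
Proof.
move=> s1 s2; split; apply/setP=> i;
  move: (fintype.subsetP s1 i) (fintype.subsetP s2 i); rewrite !inE;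
  case: (i \in A1); case: (i \in A2); case: (i \in E); case: (i \in S) => //= h1 h2;
  first [by have := h1 isT | by have := h2 isT].
Qed.

Lemma count_sub (I : finType) (S E : {set I}) b x : (x <= b)%N ->
  #|[set A : {set I} | [&& A \subset S, #|A| == b & #|A :&: E| == x]]|
  = ('C(#|S :&: E|, x) * 'C(#|S :\: E|, b - x))%N.
Proof.
move=> xb.
set D := finset.setX [set A : {set I} | A \subset S :&: E & #|A| == x]
              [set A : {set I} | A \subset S :\: E & #|A| == (b - x)%N].
have -> : [set A : {set I} | [&& A \subset S, #|A| == b & #|A :&: E| == x]]
          = [set p.1 :|: p.2 | p in D].
  apply/setP=> A; rewrite inE; apply/idP/imsetP.
    case/and3P=> sAS /eqP cA /eqP cAE.
    exists (A :&: E, A :\: E); last by rewrite /= setID.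
    rewrite !inE /= finset.setSI // finset.setSD //= cAE eqxx /= cardsD cA cAE eqxx.
    by [].
  case=> [[A1 A2]]; rewrite !inE /= => /andP[/andP[s1 c1] /andP[s2 c2]] ->.
  have [e1 e2] := split_IE s1 s2.
  rewrite e1 c1 andbT finset.subUset (fintype.subset_trans s1 (finset.subsetIl _ _))
          (fintype.subset_trans s2 (finset.subsetDl _ _)) /=.
  rewrite -(cardsID E (A1 :|: A2)) e1 e2 (eqP c1) (eqP c2) subnKC //.
rewrite card_in_imset; last first.
  move=> [A1 A2] [B1 B2]; rewrite !inE /= => /andP[/andP[s1 _] /andP[s2 _]].
  move=> /andP[/andP[t1 _] /andP[t2 _]] e.
  have [a1 a2] := split_IE s1 s2; have [b1 b2] := split_IE t1 t2.
  by congr pair; [rewrite -a1 -b1 e | rewrite -a2 -b2 e].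
by rewrite cardsX !cards_draws.
Qed.

Lemma count_hg (R : realType) (I : finType) (S E : {set I}) b x :
  (#|[set A : {set I} | [&& A \subset S, #|A| == b & #|A :&: E| == x]]|%:R : R)
  = hgeom_pmf R #|S| #|S :&: E| b x
    * #|[set A : {set I} | A \subset S & #|A| == b]|%:R.
Proof.
rewrite cards_draws /hgeom_pmf.
have kS : (#|S :&: E| <= #|S|)%N by apply: subset_leq_card; apply: finset.subsetIl.
case: (leqP b #|S|) => bS; last first.
  rewrite andbF mul0r; apply/eqP; rewrite pnatr_eq0 cards_eq0; apply/eqP.
  apply/setP => A; rewrite !inE; apply/negbTE; apply/and3P => [[sA /eqP cA _]].
  by have := subset_leq_card sA; rewrite cA => /(leq_trans bS); rewrite ltnn.
case: (leqP x b) => xb; last first.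
  rewrite !andbF mul0r; apply/eqP; rewrite pnatr_eq0 cards_eq0; apply/eqP.
  apply/setP => A; rewrite !inE; apply/negbTE; apply/and3P => [[_ /eqP cA /eqP cAE]].
  have := subset_leq_card (finset.subsetIl A E).
  by rewrite cA cAE => /(leq_trans xb); rewrite ltnn.
rewrite kS (count_sub _ _ _ _ _ xb) cardsD.
rewrite divfK // pnatr_eq0 -lt0n bin_gt0 //.
Qed.

Lemma prod_if (R : realType) (I : finType) (S A : {set I}) (c1 c0 : R) :
  A \subset S ->
  \prod_(i in S) (if i \in A then c1 else c0) = c1 ^+ #|A| * c0 ^+ (#|S| - #|A|).
Proof.
move=> sA; rewrite (big_setID A) /=.
rewrite [X in X * _](eq_bigr (fun _ => c1)); last first.
  by move=> i; rewrite inE => /andP[_ ->].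
rewrite [X in _ * X](eq_bigr (fun _ => c0)); last first.
  by move=> i; rewrite inE => /andP[/negbTE -> _].
by rewrite !prodr_const cardsD (finset.setIidPr sA).
Qed.

Lemma inner (R : realType) (I : finType) (S E : {set I}) (c1 c0 : R)
  (G : {set I} -> R) b x :
  \sum_(U : {set I}) (if (#|U :&: S :&: E| == x) && (#|U :&: S| == b)
        then \prod_(i in S) (if i \in U then c1 else c0) * G (U :\: S) else 0)
  = hgeom_pmf R #|S| #|S :&: E| b x *
    \sum_(U : {set I}) (if #|U :&: S| == b
        then \prod_(i in S) (if i \in U then c1 else c0) * G (U :\: S) else 0).
Proof.
set F0 := fun A : {set I} => \prod_(i in S) (if i \in A then c1 else c0).
have eF (U : {set I}) : \prod_(i in S) (if i \in U then c1 else c0) = F0 (U :&: S).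
  by apply: eq_bigr => i iS; rewrite inE iS andbT.
have tr (P : {set I} -> bool) :
  \sum_(U : {set I}) (if P (U :&: S)
        then \prod_(i in S) (if i \in U then c1 else c0) * G (U :\: S) else 0)
  = (\sum_(A : {set I} | A \subset S) (if P A then F0 A else 0))
    * \sum_(B : {set I} | B \subset ~: S) G B.
  rewrite -split_sum; apply: eq_bigr => U _; rewrite eF.
  by case: (P _); rewrite ?mul0r.
rewrite (tr (fun A => (#|A :&: E| == x) && (#|A| == b))).
rewrite (tr (fun A => #|A| == b)) mulrA; congr (_ * _).
set K := c1 ^+ b * c0 ^+ (#|S| - b).
have cst (P : {set I} -> bool) : (forall A, P A -> #|A| = b) ->
   \sum_(A : {set I} | A \subset S) (if P A then F0 A else 0)
   = K *+ #|[set A : {set I} | (A \subset S) && P A]|.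
  move=> hP; rewrite -big_mkcondr.
  rewrite (eq_bigr (fun _ => K)); last first.
    by move=> A /andP[sA /hP cA]; rewrite /F0 prod_if // cA.
  rewrite (eq_bigl (fun A => A \in [set A : {set I} | (A \subset S) && P A])); last first.
    by move=> A; rewrite inE.
  by rewrite sumr_const.
rewrite !cst; last 2 first.
- by move=> A /eqP.
- by move=> A /andP[_ /eqP].
rewrite -mulr_natr -[in RHS]mulr_natr mulrCA; congr (_ * _).
rewrite -count_hg; congr (_%:R); apply: eq_card => A; rewrite !inE.
by case: (A \subset S); case: (#|A| == b); case: (#|A :&: E| == x).
Qed.

Lemma comb (R : realType) (I : finType) (Tge Es : {set I}) (h : bool -> bool -> R) m k b x :
  \sum_(p : {set I} * {set I} | [&& #|p.2 :&: (p.1 :&: Tge) :&: Es| == x,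
        #|p.1 :&: Tge| == m, #|p.1 :&: Tge :&: Es| == k & #|p.2 :&: (p.1 :&: Tge)| == b])
     \prod_i h (i \in p.2) (i \in p.1)
  = hgeom_pmf R m k b x *
    \sum_(p : {set I} * {set I} | [&& #|p.1 :&: Tge| == m,
        #|p.1 :&: Tge :&: Es| == k & #|p.2 :&: (p.1 :&: Tge)| == b])
     \prod_i h (i \in p.2) (i \in p.1).
Proof.
have eP (F : {set I} -> {set I} -> R) :
  \sum_(p : {set I} * {set I}) F p.1 p.2 = \sum_(V : {set I}) \sum_(U : {set I}) F V U.
  by rewrite pair_big.
rewrite big_mkcond [in RHS]big_mkcond.
rewrite (eP (fun V U => if [&& #|U :&: (V :&: Tge) :&: Es| == x,
        #|V :&: Tge| == m, #|V :&: Tge :&: Es| == k & #|U :&: (V :&: Tge)| == b]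
        then \prod_i h (i \in U) (i \in V) else 0)).
rewrite (eP (fun V U => if [&& #|V :&: Tge| == m,
        #|V :&: Tge :&: Es| == k & #|U :&: (V :&: Tge)| == b]
        then \prod_i h (i \in U) (i \in V) else 0)).
rewrite mulr_sumr; apply: eq_bigr => V _.
have [/andP[/eqP eM /eqP eK] | nVK] :=
  boolP ((#|V :&: Tge| == m) && (#|V :&: Tge :&: Es| == k)); last first.
  rewrite !big1 ?mulr0 // => U _.
    by move: nVK; case: (#|V :&: Tge| == m); case: (#|V :&: Tge :&: Es| == k).
  by move: nVK; case: (#|V :&: Tge| == m); case: (#|V :&: Tge :&: Es| == k);
     rewrite //= andbF.
have hW (U : {set I}) : \prod_i h (i \in U) (i \in V) =
   \prod_(i in V :&: Tge) (if i \in U then h true true else h false true)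
   * (fun B => \prod_(i in ~: (V :&: Tge)) h (i \in B) (i \in V)) (U :\: (V :&: Tge)).
  rewrite /= (bigID (mem (V :&: Tge))) /=; congr (_ * _).
    apply: eq_bigr => i; rewrite inE => /andP[iV _]; rewrite iV.
    by case: (i \in U).
  rewrite [RHS](eq_bigl (fun i => ~~ (i \in V :&: Tge))); last by move=> i; rewrite inE.
  by apply: eq_bigr => i /negbTE iS; rewrite finset.in_setD iS.
transitivity (\sum_(U : {set I})
   (if (#|U :&: (V :&: Tge) :&: Es| == x) && (#|U :&: (V :&: Tge)| == b)
    then \prod_(i in V :&: Tge) (if i \in U then h true true else h false true)
   * (fun B => \prod_(i in ~: (V :&: Tge)) h (i \in B) (i \in V)) (U :\: (V :&: Tge))
    else 0)).
  by apply: eq_bigr => U _; rewrite eM eK !eqxx /= hW.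
rewrite (inner R I (V :&: Tge) Es (h true true) (h false true)
  (fun B => \prod_(i in ~: (V :&: Tge)) h (i \in B) (i \in V))) eM eK.
congr (_ * _).
by apply: eq_bigr => U _; rewrite !eqxx /= hW.
Qed.

Local Open Scope classical_set_scope.
Lemma fin_partition (d : measure_display) (T : measurableType d) (R : realType)
  (P : probability T R) (J : finType) (f : T -> J) (Q : pred J) :
  (forall j, measurable [set w | f w = j]) ->
  P [set w | Q (f w)] = (\sum_(j | Q j) P [set w | f w = j])%E.
Proof.
move=> mf.
have eC (j : J) (s : seq J) :
    [set w | f w \in j :: s] = [set w | f w = j] `|` [set w | f w \in s].
  apply/seteqP; split=> w /=; rewrite in_cons.
    by case/orP => [/eqP ->|]; [left|right].
  by case=> [->|->]; rewrite ?eqxx ?orbT.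
have mS (s : seq J) : measurable [set w | f w \in s].
  elim: s => [|j s IH].
    have -> : [set w | f w \in [::]] = set0 by apply/seteqP; split=> w //=.
    exact: measurable0.
  by rewrite eC; apply: measurableU.
have key (s : seq J) : uniq s ->
    P [set w | f w \in s] = (\sum_(j <- s) P [set w | f w = j])%E.
  elim: s => [|j s IH] /=.
    have -> : [set w | f w \in [::]] = set0 by apply/seteqP; split=> w //=.
    by rewrite big_nil measure0.
  case/andP=> js us; rewrite big_cons -IH // eC measureU //.
  apply/seteqP; split=> w //= [fj fs]; move: js.
  by rewrite -fj fs.
rewrite -big_filter -key ?filter_uniq ?index_enum_uniq //.
congr (P _); apply/seteqP; split=> w /=; by rewrite mem_filter mem_index_enum andbT.
Qed.

Lemma keyD (R : realType) (a t : R) (c : \bar R) :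
  ((a%:E <= c)%E && (mine a%:E c == t%:E)) = (((t%:E <= c)%E && (t <= a)) && (a == t)).
Proof.
have [ac|ca] := leP a%:E c.
  case: (eqVneq a t) => [eat|nat]; last by rewrite andbF eqe (negbTE nat).
  by move: ac; rewrite eat => ac; rewrite ac lexx eqxx.
case: (eqVneq a t) => [eat|nat]; last by rewrite andbF.
by move: ca; rewrite eat => ca; rewrite leNgt ca.
Qed.


Theorem theorem1 (R : realType) (d : measure_display) (Omega : measurableType d)
  (P : probability Omega R) (n : nat) (p1 : R)
  (T1 T0 : 'I_n -> R) (Z : 'I_n -> Omega -> bool)
  (C : 'I_n -> Omega -> \bar R * \bar R) :
  (0 < p1 < 1) ->
  (* event times are nonnegative; censoring times lie in [0, +oo] *)
  (forall i, 0 <= T1 i) -> (forall i, 0 <= T0 i) ->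
  (forall i w, (0 <= (C i w).1)%E /\ (0 <= (C i w).2)%E) ->
  (* measurability *)
  (forall i, measurable [set w | Z i w]) ->
  (forall i, measurable_fun setT (C i)) ->
  (* Assumptions 1 and 2 (given T(1), T(0)): Z_1..Z_n i.i.d. Bernoulli(p1),
     independent of the censoring pairs, which are mutually independent ... *)
  (forall (z : 'I_n -> bool) (A : 'I_n -> set (\bar R * \bar R)),
     (forall i, measurable (A i)) ->
     P [set w | forall i, Z i w = z i /\ A i (C i w)]
     = ((\prod_(i < n) bern_pmf p1 (z i))%:E
        * \prod_(i < n) P [set w | A i (C i w)])%E) ->
  (* ... and identically distributed *)
  (forall i j (A : set (\bar R * \bar R)), measurable A ->
     P [set w | A (C i w)] = P [set w | A (C j w)]) ->
  (* null hypothesis H0 *)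
  (forall i, T1 i = T0 i) ->
  forall t : R, 0 <= t ->
  forall m k b x : nat,
    P [set w | [/\ Dbar1 T1 T0 Z C t w = x, Nbar T1 T0 Z C t w = m,
                   Dbar T1 T0 Z C t w = k & Nbar1 T1 T0 Z C t w = b]]
    = ((hgeom_pmf R m k b x)%:E
       * P [set w | [/\ Nbar T1 T0 Z C t w = m, Dbar T1 T0 Z C t w = k
                      & Nbar1 T1 T0 Z C t w = b]])%E.
Proof.
move=> hp hT1 hT0 hC0 mZ mC hI hId H0 t t0 m k b x.
pose Tge := [set i : 'I_n | (t <= T1 i)%R]%SET.
pose Es := [set i : 'I_n | T1 i == t]%SET.
pose Zs (w : Omega) := [set i : 'I_n | Z i w]%SET.
pose Rs (w : Omega) := [set i : 'I_n | (t%:E <= (if Z i w then (C i w).1 else (C i w).2))%E]%SET.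
have cD1 w : Dbar1 T1 T0 Z C t w = #|Zs w :&: (Rs w :&: Tge) :&: Es|.
  apply: eq_card => i; rewrite !inE /Delta /Wobs /Cobs /Tobs -H0 if_same.
  by rewrite keyD !andbA.
have cD w : Dbar T1 T0 Z C t w = #|Rs w :&: Tge :&: Es|.
  apply: eq_card => i; rewrite !inE /Delta /Wobs /Cobs /Tobs -H0 if_same.
  by rewrite keyD.
have cN1 w : Nbar1 T1 T0 Z C t w = #|Zs w :&: (Rs w :&: Tge)|.
  apply: eq_card => i; rewrite !inE /Wobs /Cobs /Tobs -H0 if_same.
  by rewrite le_min lee_fin; case: (Z i w); case: (t <= T1 i); rewrite /= ?andbT ?andbF.
have cN w : Nbar T1 T0 Z C t w = #|Rs w :&: Tge|.
  rewrite /Nbar -(cardsID (Zs w) (Rs w :&: Tge)); congr (_ + _)%N.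
    apply: eq_card => i; rewrite !inE /Wobs /Cobs /Tobs -H0 if_same.
    by rewrite le_min lee_fin; case: (Z i w); case: (t <= T1 i); rewrite /= ?andbT ?andbF.
  apply: eq_card => i; rewrite !inE /Wobs /Cobs /Tobs -H0 if_same.
  by rewrite le_min lee_fin; case: (Z i w); case: (t <= T1 i); rewrite /= ?andbT ?andbF.
pose Ar (zz rr : bool) := [set c : \bar R * \bar R |
   (t%:E <= (if zz then c.1 else c.2))%E = rr].
have mE (rr : bool) : measurable [set e : \bar R | (t%:E <= e)%E = rr].
  have mT : measurable [set e : \bar R | (t%:E <= e)%E = true].
    have -> : [set e : \bar R | (t%:E <= e)%E = true] = [set` `[t%:E, +oo[%R].
      by apply/seteqP; split=> e /=; rewrite in_itv /= andbT.
    exact: emeasurable_itv.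
  case: rr => //.
  have -> : [set e : \bar R | (t%:E <= e)%E = false]
          = ~` [set e : \bar R | (t%:E <= e)%E = true].
    by apply/seteqP; split=> e /=; [move=> -> | move/negP/negbTE].
  exact: measurableC.
have mAr zz rr : measurable (Ar zz rr).
  case: zz.
  by have := measurable_fst (T2 := \bar R) measurableT _ (mE rr); rewrite setTI => h; exact: h.
by have := measurable_snd (T1 := \bar R) measurableT _ (mE rr); rewrite setTI => h; exact: h.
have mpre i zz rr : measurable [set w | Ar zz rr (C i w)].
  by have := mC i measurableT _ (mAr zz rr); rewrite setTI.
have [q Hq] : exists q : bool -> bool -> R,
    forall i zz rr, P [set w | Ar zz rr (C i w)] = (q zz rr)%:E.
  case: (pickP (fun _ : 'I_n => true)) => [i0 _ | none].
    exists (fun zz rr => fine (P [set w | Ar zz rr (C i0 w)])) => i zz rr.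
    rewrite (hId i i0 _ (mAr zz rr)) fineK //.
    exact: fin_num_measure.
  by exists (fun _ _ => 0%R) => i; have := none i.
pose f (w : Omega) := (Rs w, Zs w).
have eS (V U : {set 'I_n}) : [set w | f w = (V, U)] =
    [set w | forall i, Z i w = (i \in U) /\ Ar (i \in U) (i \in V) (C i w)].
  apply/seteqP; split=> w /=.
    case=> <- <- i; rewrite /Zs /Rs !inE; split=> //.
  move=> H; congr pair; apply/setP=> i; rewrite /Zs /Rs !inE;
    have [e1 e2] := H i; rewrite e1 //.
have mf (p : {set 'I_n} * {set 'I_n}) : measurable [set w | f w = p].
  case: p => V U; rewrite eS.
  have -> : [set w | forall i, Z i w = (i \in U) /\ Ar (i \in U) (i \in V) (C i w)]
      = \bigcap_(i in [set: 'I_n]) ([set w | Z i w = (i \in U)]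
                                    `&` [set w | Ar (i \in U) (i \in V) (C i w)]).
    by apply/seteqP; split=> w /= H i; [move=> _; exact: H | exact: H i I].
  apply: fin_bigcap_measurable; first exact: finite_finset.
  move=> i _; apply: measurableI => //.
  case: (i \in U); first exact: mZ.
  have -> : [set w | Z i w = false] = ~` [set w | Z i w].
    by apply/seteqP; split=> w /=; [move=> -> | move/negP/negbTE].
  exact: measurableC.
have hPW (V U : {set 'I_n}) : P [set w | f w = (V, U)] =
    (\prod_i (bern_pmf p1 (i \in U) * q (i \in U) (i \in V)))%:E.
  rewrite eS.
  have := hI (fun i => i \in U) (fun i => Ar (i \in U) (i \in V)) (fun i => mAr _ _).
  rewrite /= => ->.
  rewrite (eq_bigr (fun i => (q (i \in U) (i \in V))%:E)); last by move=> i _; apply: Hq.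
  by rewrite prodEFin -EFinM -big_split.
pose Q1 : pred ({set 'I_n} * {set 'I_n}) := fun p =>
  [&& #|p.2 :&: (p.1 :&: Tge) :&: Es| == x, #|p.1 :&: Tge| == m,
      #|p.1 :&: Tge :&: Es| == k & #|p.2 :&: (p.1 :&: Tge)| == b].
pose Q2 : pred ({set 'I_n} * {set 'I_n}) := fun p =>
  [&& #|p.1 :&: Tge| == m, #|p.1 :&: Tge :&: Es| == k & #|p.2 :&: (p.1 :&: Tge)| == b].
have -> : [set w | [/\ Dbar1 T1 T0 Z C t w = x, Nbar T1 T0 Z C t w = m,
           Dbar T1 T0 Z C t w = k & Nbar1 T1 T0 Z C t w = b]] = [set w | Q1 (f w)].
  apply/seteqP; split=> w /=; rewrite /Q1 /f /= cD1 cN cD cN1.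
    by case=> -> -> -> ->; rewrite !eqxx.
  by case/and4P=> /eqP-> /eqP-> /eqP-> /eqP->.
have -> : [set w | [/\ Nbar T1 T0 Z C t w = m,
           Dbar T1 T0 Z C t w = k & Nbar1 T1 T0 Z C t w = b]] = [set w | Q2 (f w)].
  apply/seteqP; split=> w /=; rewrite /Q2 /f /= cN cD cN1.
    by case=> -> -> ->; rewrite !eqxx.
  by case/and3P=> /eqP-> /eqP-> /eqP->.
have hPW' (p : {set 'I_n} * {set 'I_n}) : P [set w | f w = p] =
    (\prod_i (bern_pmf p1 (i \in p.2) * q (i \in p.2) (i \in p.1)))%:E.
  by case: p => V U; apply: hPW.
rewrite (@fin_partition _ _ _ P _ f Q1 mf) (@fin_partition _ _ _ P _ f Q2 mf).
rewrite (eq_bigr _ (fun p _ => hPW' p)) (eq_bigr _ (fun p _ => hPW' p)).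
rewrite !sumEFin -EFinM; congr EFin.
exact: (comb R 'I_n Tge Es (fun zz rr => bern_pmf p1 zz * q zz rr) m k b x).
Qed.
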